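(* A norm $\|\cdot\|$ on $\mathbb{R}^2$ is an $F$-norm if and only if (i) it is radially symmetric, i.e. $\|(x_0,x_1)\|=\|(|x_0|,|x_1|)\|$, and (ii) the Lebesgue derivative of $t\mapsto\|(t,1)\|$ on $[0,\infty)$ is almost everywhere equal to a univariate distribution function $F$ on $[0,\infty)$ with finite first moment equal to $\|(0,1)\|$. In that case $\|\cdot\|=\|\cdot\|_F$.
   Context: For a random variable $X\ge0$ a.s. with $0<E(X)<\infty$ and distribution function $F$, $\|(x_0,x_1)\|_F=E(\max(|x_0|,|x_1|X))$; an $F$-norm on $\mathbb{R}^2$ is any norm of this form. *)

(* Defs.v *)
From HB Require Import structures.
From mathcomp Require Import all_boot all_order all_algebra.
From mathcomp Require Import all_classical all_reals all_analysis.
Set Implicit Arguments. Unset Strict Implicit. Unset Printing Implicit Defensive.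
Import Order.TTheory GRing.Theory Num.Theory.
Import numFieldNormedType.Exports.
Local Open Scope classical_set_scope.
Local Open Scope ring_scope.

Definition is_norm2 (R : realType) (N : R * R -> R) : Prop :=
  [/\ (forall x0 x1, N (x0, x1) = 0 -> x0 = 0 /\ x1 = 0),
      (forall a x0 x1, N (a * x0, a * x1) = `|a| * N (x0, x1)) &
      (forall x0 x1 y0 y1, N (x0 + y0, x1 + y1) <= N (x0, x1) + N (y0, y1))].

Definition cdf (R : realType) (mu : probability R R) (t : R) : R :=
  fine (mu [set` `]-oo, t]]).

(* The F-norm attached to the law mu of X (i.e. F = cdf mu):
   ||(x0,x1)||_F = E max(|x0|, |x1| X) = \int max(|x0|,|x1| y) dmu(y). *)
Definition Fnorm_eq (R : realType) (N : R * R -> R) (mu : probability R R) : Prop :=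
  forall x0 x1 : R,
    ((N (x0, x1))%:E = \int[mu]_y (Num.max `|x0| (`|x1| * y))%:E)%E.

Definition Fnorm_law (R : realType) (mu : probability R R) : Prop :=
  [/\ mu [set` `]-oo, 0[] = 0%E,
      mu.-integrable setT (fun y : R => y%:E) &
      (0 < \int[mu]_y y%:E)%E].

Definition is_Fnorm (R : realType) (N : R * R -> R) : Prop :=
  exists mu : probability R R, Fnorm_law mu /\ Fnorm_eq N mu.

Definition radially_symmetric (R : realType) (N : R * R -> R) : Prop :=
  forall x0 x1, N (x0, x1) = N (`|x0|, `|x1|).

Definition cond_ii (R : realType) (N : R * R -> R) (mu : probability R R) : Prop :=
  [/\ mu [set` `]-oo, 0[] = 0%E,
      mu.-integrable setT (fun y : R => y%:E),
      (\int[mu]_y y%:E = (N (0, 1))%:E)%E &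
      {ae (@lebesgue_measure R), forall t : R, t \in `[0, +oo[ ->
          derivable (fun s : R => N (s, 1)) t 1 /\
          derive1 (fun s : R => N (s, 1)) t = cdf mu t}].

(* Main.v *)
Require Import Defs.
From HB Require Import structures.
From mathcomp Require Import all_boot all_order all_algebra.
From mathcomp Require Import all_classical all_reals all_analysis.
From mathcomp Require Import measurable_realfun.
From mathcomp Require Import ring lra.
Set Implicit Arguments. Unset Strict Implicit. Unset Printing Implicit Defensive.
Import Order.TTheory GRing.Theory Num.Theory.
Import numFieldNormedType.Exports.
Local Open Scope classical_set_scope.
Local Open Scope ring_scope.
Lemma N00 (R : realType) (N : R * R -> R) (hN : is_norm2 N) : N (0, 0) = 0.
Proof. move: hN; rewrite /is_norm2 => -[_ hom _]. have := hom 0 0 0. rewrite normr0 !mul0r. by []. Qed.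

Lemma Nhom (R : realType) (N : R * R -> R) (hN : is_norm2 N) a x y :
  N (a * x, a * y) = `|a| * N (x, y).
Proof. by move: hN; rewrite /is_norm2 => -[_ hom _]; apply: hom. Qed.

Lemma Ntri (R : realType) (N : R * R -> R) (hN : is_norm2 N) x0 x1 y0 y1 :
  N (x0 + y0, x1 + y1) <= N (x0, x1) + N (y0, y1).
Proof. by move: hN; rewrite /is_norm2 => -[_ _ tri]; apply: tri. Qed.

Lemma Nge0 (R : realType) (N : R * R -> R) (hN : is_norm2 N) x y : 0 <= N (x, y).
Proof.
have := Ntri hN x y (-x) (-y).
rewrite !subrr (N00 hN) -[-x]mulN1r -[-y]mulN1r (Nhom hN) normrN normr1 mul1r.
lra.
Qed.

Lemma Nscal (R : realType) (N : R * R -> R) (hN : is_norm2 N) a x :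
  0 <= a -> N (a * x, a) = a * N (x, 1).
Proof. by move=> a0; rewrite -{2}[a]mulr1 (Nhom hN) ger0_norm. Qed.

Lemma Nconv (R : realType) (N : R * R -> R) (hN : is_norm2 N) x y z :
  x <= y -> y <= z ->
  (z - x) * N (y, 1) <= (z - y) * N (x, 1) + (y - x) * N (z, 1).
Proof.
move=> xy yz.
rewrite -(Nscal hN) ?subr_ge0 ?(le_trans xy) // -(Nscal hN) ?subr_ge0 // -(Nscal hN) ?subr_ge0 //.
have -> : (z - x) * y = (z - y) * x + (y - x) * z by ring.
have -> : z - x = (z - y) + (y - x) by ring.
exact: Ntri.
Qed.

Lemma NLip (R : realType) (N : R * R -> R) (hN : is_norm2 N) s t :
  `|N (s, 1) - N (t, 1)| <= `|s - t| * N (1, 0).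
Proof.
have h1 : forall u v, N (u, 1) <= N (v, 1) + `|u - v| * N (1, 0).
  move=> u v; have := Ntri hN (u - v) 0 v 1.
  have e : N (u - v, 0) = `|u - v| * N (1, 0) by rewrite -(Nhom hN) mulr1 mulr0.
  rewrite subrK add0r e; lra.
have := h1 s t; have := h1 t s; rewrite distrC; move=> a b.
rewrite ler_norml; apply/andP; split; lra.
Qed.

Lemma N2Lip (R : realType) (N : R * R -> R) (hN : is_norm2 N) t :
  `|N (t, 1) - N (t, 0)| <= N (0, 1).
Proof.
have h1 := Ntri hN t 0 0 1; rewrite addr0 add0r in h1.
have h2 := Ntri hN t 1 0 (-1); rewrite addr0 subrr in h2.
have e : N (0, -1) = N (0, 1).
  by have := Nhom hN (-1) 0 1; rewrite mulr0 mulr1 normrN normr1 mul1r.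
rewrite e in h2.
rewrite ler_norml; apply/andP; split; lra.
Qed.
Definition GG (R : realType) (mu : probability R R) (t : R) : R :=
  \int[mu]_y (Num.max t y).

Lemma int_max (R : realType) (mu : probability R R)
  (HI : mu.-integrable setT (fun y : R => y%:E)) (a b : R) :
  mu.-integrable setT (EFin \o (fun y => Num.max a (b * y))).
Proof.
apply: (@le_integrable _ _ _ mu setT measurableT _
   (fun y => (`|a|%:E + (`|b|%:E * (`|y|)%:E)))%E).
- apply/measurable_EFinP; apply: measurable_maxr => //.
- move=> y _ /=; rewrite lee_fin.
  rewrite [X in _ <= X]ger0_norm ?addr_ge0 ?mulr_ge0 // -normrM.
  have := normr_ge0 a; have := normr_ge0 (b * y).
  by have [h|h] := leP a (b * y); lra.
- have HI' : mu.-integrable setT (EFin \o (@id R)) by [].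
  have i1 : mu.-integrable setT (EFin \o cst `|a|) :=
    finite_measure_integrable_cst _ _ measurableT.
  have i2 := integrableZl measurableT `|b| (integrable_norm HI').
  have := integrableD measurableT i1 i2.
  by apply: (eq_integrable measurableT) => y _.
Qed.
Lemma cdfE (R : realType) (mu : probability R R) s :
  Defs.cdf mu s = \int[mu]_y (\1_([set` `]-oo, s]]) y).
Proof. by rewrite /Defs.cdf /Rintegral integral_indic ?setIT //. Qed.

Lemma indic_le (R : realType) (s y : R) :
  \1_([set` `]-oo, s]]) y = (if y <= s then 1 else 0 : R).
Proof. by rewrite indicE mem_setE in_itv /=; case: (y <= s). Qed.

Lemma max_incr (R : realType) (s t y : R) : s <= t ->
  (t - s) * \1_([set` `]-oo, s]]) y <= Num.max t y - Num.max s y <=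
  (t - s) * \1_([set` `]-oo, t]]) y.
Proof.
move=> st; rewrite !indic_le.
have [ys|ys] := leP y s; have [yt|yt] := leP y t;
  have [h1|h1] := leP t y; have [h2|h2] := leP s y; apply/andP; split; lra.
Qed.
Lemma int_max1 (R : realType) (mu : probability R R)
  (HI : mu.-integrable setT (fun y : R => y%:E)) (a : R) :
  mu.-integrable setT (EFin \o (fun y => Num.max a y)).
Proof.
have := int_max HI a 1.
by apply: (eq_integrable measurableT) => y _ /=; rewrite mul1r.
Qed.

Lemma int_indicZ (R : realType) (mu : probability R R) (k s : R) :
  mu.-integrable setT (EFin \o (fun y => k * \1_([set` `]-oo, s]]) y)).
Proof.
have := integrableZl measurableT k (integrable_indic mu (measurable_itv `]-oo, s])).
by apply: (eq_integrable measurableT) => y _ /=; rewrite EFinM.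
Qed.

Lemma int_sub (R : realType) (mu : probability R R) (f g : R -> R) :
  mu.-integrable setT (EFin \o f) -> mu.-integrable setT (EFin \o g) ->
  mu.-integrable setT (EFin \o (fun y => f y - g y)).
Proof.
move=> i1 i2; have := integrableB measurableT i1 i2.
by apply: (eq_integrable measurableT) => y _ /=; rewrite EFinB.
Qed.

Lemma GG_incr (R : realType) (mu : probability R R)
  (HI : mu.-integrable setT (fun y : R => y%:E)) s t : s <= t ->
  (t - s) * Defs.cdf mu s <= GG mu t - GG mu s <= (t - s) * Defs.cdf mu t.
Proof.
move=> st; rewrite /GG -RintegralB //; try exact: int_max1.
rewrite !cdfE -!RintegralZl //; try exact: (integrable_indic mu (measurable_itv _)).
apply/andP; split; apply: le_Rintegral => //;
  try exact: int_indicZ; try (apply: int_sub; exact: int_max1).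
- by move=> y _; have /andP[] := max_incr y st.
- by move=> y _; have /andP[] := max_incr y st.
Qed.
Lemma mu_fin (R : realType) (mu : probability R R) (A : set R) :
  measurable A -> (fine (mu A))%:E = mu A.
Proof. by move=> mA; rewrite fineK // fin_num_measure. Qed.

Lemma cdf_01 (R : realType) (mu : probability R R) s :
  0 <= Defs.cdf mu s <= 1.
Proof.
rewrite /Defs.cdf; apply/andP; split; rewrite -lee_fin mu_fin;
  try exact: measurable_itv.
- exact: measure_ge0.
- by apply: probability_le1; exact: measurable_itv.
Qed.

Lemma cdf_mono (R : realType) (mu : probability R R) s t :
  s <= t -> Defs.cdf mu s <= Defs.cdf mu t.
Proof.
move=> st; rewrite /Defs.cdf -lee_fin !mu_fin; try exact: measurable_itv.
apply: le_measure; try (apply: mem_set; exact: measurable_itv).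
by move=> y /=; rewrite !in_itv /= => /le_trans; apply.
Qed.

Lemma GG_Lip (R : realType) (mu : probability R R)
  (HI : mu.-integrable setT (fun y : R => y%:E)) s t :
  `|GG mu t - GG mu s| <= `|t - s|.
Proof.
wlog st : s t / s <= t.
  move=> W; have [h|h] := leP s t; first exact: W.
  by rewrite distrC (distrC t); apply: W; rewrite ltW.
have /andP[h1 h2] := GG_incr HI st.
have /andP[c1 c2] := cdf_01 mu s; have /andP[c3 c4] := cdf_01 mu t.
have ts0 : 0 <= t - s by rewrite subr_ge0.
rewrite (ger0_norm ts0) ler_norml; apply/andP; split; nra.
Qed.

Lemma GG_ge (R : realType) (mu : probability R R)
  (HI : mu.-integrable setT (fun y : R => y%:E)) t : t <= GG mu t.
Proof.
have := @le_Rintegral _ _ _ mu setT (fun _ => t) (fun y => Num.max t y) measurableT.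
rewrite Rintegral_cst //.
rewrite [X in t * X](_ : _ = 1); last exact: (congr1 fine (probability_setT mu)).
rewrite mulr1; apply => //.
- exact: (finite_measure_integrable_cst _ _ measurableT).
- exact: int_max1.
- by move=> y _; rewrite le_max lexx.
Qed.

Lemma int_max0 (R : realType) (mu : probability R R)
  (H0 : mu [set` `]-oo, 0[] = 0%E) :
  (\int[mu]_y (Num.max 0 y)%:E = \int[mu]_y y%:E)%E.
Proof.
apply: ae_eq_integral => //.
- apply/measurable_EFinP; apply: measurable_maxr => //.
- exists [set` `]-oo, 0[]; split; [exact: measurable_itv | exact: H0 |].
  move=> y /= h; rewrite in_itv /=; apply/negPn/negP; rewrite -leNgt => y0.
  by apply: h => _; rewrite max_r.
Qed.
Lemma ae_dense (R : realType) (P : R -> Prop) :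
  {ae (@lebesgue_measure R), forall t : R, P t} ->
  forall u v : R, u < v -> exists t, u < t < v /\ P t.
Proof.
move=> [A [mA A0 sub]] u v uv.
apply: contrapT => hno.
have sA : [set` `]u, v[] `<=` A.
  move=> x /= xuv; apply: sub => /= Px; apply: hno; exists x; split => //.
have h := @le_measure _ _ _ (@lebesgue_measure R) _ _ (mem_set (measurable_itv `]u, v[)) (mem_set mA) sA.
have h0 : (lebesgue_measure A <= 0)%E by rewrite A0.
have hm : ((v - u)%:E <= lebesgue_measure [set` `]u, v[])%E.
  by rewrite lebesgue_measure_itv /= lte_fin uv -EFinD.
have := le_trans hm (le_trans h h0).
by rewrite lee_fin subr_le0 leNgt uv.
Qed.
Lemma near_dnbhs0 (R : realType) (P : R -> Prop) d : 0 < d ->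
  (forall h, h != 0 -> `|h| < d -> P h) -> \forall h \near (0 : R)^', P h.
Proof.
move=> d0 H; near=> h; apply: H.
- by near: h; exact: nbhs_dnbhs_neq.
- by near: h; exact: dnbhs0_lt.
Unshelve. all: by end_near.
Qed.

Lemma near_right_ex (R : realType) (t : R) (P : R -> Prop) :
  (\forall x \near t^'+, P x) -> exists2 d, 0 < d & forall x, t < x < t + d -> P x.
Proof.
move=> /nbhs_ballP[d /= d0 H]; exists d => // x /andP[tx xtd].
apply: H => //=; rewrite /ball /= ltr_distlC; apply/andP; split; lra.
Qed.

Lemma near_left_ex (R : realType) (t : R) (P : R -> Prop) :
  (\forall x \near t^'-, P x) -> exists2 d, 0 < d & forall x, t - d < x < t -> P x.
Proof.
move=> /nbhs_ballP[d /= d0 H]; exists d => // x /andP[tx xtd].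
apply: H => //=; rewrite /ball /= ltr_distlC; apply/andP; split; lra.
Qed.

Lemma deriv_cvg (R : realType) (f : R -> R) s : derivable f s 1 ->
  (fun h => h^-1 * (f (h + s) - f s)) @ (0 : R)^' --> derive1 f s.
Proof.
move=> d; rewrite /derive1.
have -> : (fun h => h^-1 * (f (h + s) - f s)) =
          (fun h => h^-1 *: ((f \o shift s) (h *: 1) - f s)).
  by apply: funext => h /=; rewrite /GRing.scale /= mulr1.
exact: d.
Qed.

Lemma cvg_derive (R : realType) (f : R -> R) s L :
  (fun h => h^-1 * (f (h + s) - f s)) @ (0 : R)^' --> L ->
  derivable f s 1 /\ derive1 f s = L.
Proof.
move=> c.
have e : (fun h => h^-1 * (f (h + s) - f s)) =
          (fun h => h^-1 *: ((f \o shift s) (h *: 1) - f s)).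
  by apply: funext => h /=; rewrite /GRing.scale /= mulr1.
split; first by rewrite /derivable -e; apply/cvg_ex; exists L.
rewrite /derive1; exact: cvg_lim.
Qed.
Lemma deriv_le (R : realType) (f : R -> R) s c d : derivable f s 1 -> 0 < d ->
  (forall h, h != 0 -> `|h| < d -> h^-1 * (f (h + s) - f s) <= c) ->
  derive1 f s <= c.
Proof.
move=> df d0 H.
have <- : lim ((fun h => h^-1 * (f (h + s) - f s)) @ (0:R)^') = derive1 f s.
  exact: (cvg_lim (@Rhausdorff R) (deriv_cvg df)).
apply: limr_le; first by apply/cvg_ex; eexists; exact: deriv_cvg df.
exact: near_dnbhs0 d0 H.
Qed.

Lemma deriv_ge (R : realType) (f : R -> R) s c d : derivable f s 1 -> 0 < d ->
  (forall h, h != 0 -> `|h| < d -> c <= h^-1 * (f (h + s) - f s)) ->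
  c <= derive1 f s.
Proof.
move=> df d0 H.
have <- : lim ((fun h => h^-1 * (f (h + s) - f s)) @ (0:R)^') = derive1 f s.
  exact: (cvg_lim (@Rhausdorff R) (deriv_cvg df)).
apply: limr_ge; first by apply/cvg_ex; eexists; exact: deriv_cvg df.
exact: near_dnbhs0 d0 H.
Qed.
Lemma divle (R : realType) (h X c : R) : h != 0 ->
  (0 < h -> X <= c * h) -> (h < 0 -> c * h <= X) -> h^-1 * X <= c.
Proof.
move=> h0 H1 H2; have [hn|hp|] := ltgtP h 0; last by move/eqP: h0.
- by rewrite -(ler_nM2l hn) mulrA mulfV // mul1r mulrC H2.
- by rewrite -(ler_pM2l hp) mulrA mulfV // mul1r mulrC H1.
Qed.

Lemma divge (R : realType) (h X c : R) : h != 0 ->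
  (0 < h -> c * h <= X) -> (h < 0 -> X <= c * h) -> c <= h^-1 * X.
Proof.
move=> h0 H1 H2; have [hn|hp|] := ltgtP h 0; last by move/eqP: h0.
- by rewrite -(ler_nM2l hn) mulrA mulfV // mul1r mulrC H2.
- by rewrite -(ler_pM2l hp) mulrA mulfV // mul1r mulrC H1.
Qed.

Lemma slope_s (R : realType) (N : R * R -> R) (hN : is_norm2 N) s t : s < t ->
  derivable (fun x => N (x, 1)) s 1 ->
  derive1 (fun x => N (x, 1)) s * (t - s) <= N (t, 1) - N (s, 1).
Proof.
move=> st df; set c := (N (t, 1) - N (s, 1)) / (t - s).
have tsp : 0 < t - s by rewrite subr_gt0.
have ec : c * (t - s) = N (t, 1) - N (s, 1) by rewrite /c mulfVK // gt_eqF.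
rewrite -ec ler_pM2r //; apply: (deriv_le df tsp) => h h0 hd.
apply: divle => // [hp|hn].
- rewrite -(ler_pM2r tsp) [c * h * _]mulrAC ec.
  have := Nconv hN (x := s) (y := h + s) (z := t).
  have : h < t - s by rewrite (le_lt_trans (ler_norm h)).
  move=> hts; rewrite lerDr (ltW hp) => /(_ isT); rewrite -lerBrDr (ltW hts) => /(_ isT).
  lra.
- rewrite -(ler_pM2r tsp) [c * h * _]mulrAC ec.
  have := Nconv hN (x := h + s) (y := s) (z := t).
  rewrite gerDr (ltW hn) (ltW st) => /(_ isT isT).
  lra.
Qed.

Lemma slope_t (R : realType) (N : R * R -> R) (hN : is_norm2 N) s t : s < t ->
  derivable (fun x => N (x, 1)) t 1 ->
  N (t, 1) - N (s, 1) <= derive1 (fun x => N (x, 1)) t * (t - s).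
Proof.
move=> st df; set c := (N (t, 1) - N (s, 1)) / (t - s).
have tsp : 0 < t - s by rewrite subr_gt0.
have ec : c * (t - s) = N (t, 1) - N (s, 1) by rewrite /c mulfVK // gt_eqF.
rewrite -ec ler_pM2r //; apply: (deriv_ge df tsp) => h h0 hd.
apply: divge => // [hp|hn].
- rewrite -(ler_pM2r tsp) [c * h * _]mulrAC ec.
  have := Nconv hN (x := s) (y := t) (z := h + t).
  rewrite lerDr (ltW hp) (ltW st) => /(_ isT isT).
  lra.
- rewrite -(ler_pM2r tsp) [c * h * _]mulrAC ec.
  have := Nconv hN (x := s) (y := h + t) (z := t).
  have : - h < t - s by rewrite (le_lt_trans (ler_norm (-h))) // normrN.
  move=> hts; rewrite gerDr (ltW hn) => /(_ _ isT).
  have -> : s <= h + t by lra.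
  move=> /(_ isT); lra.
Qed.
Lemma bern (R : realType) (x : R) n : 0 <= x -> 1 + n%:R * x <= (1 + x) ^+ n.
Proof.
move=> x0; elim: n => [|n IH]; first by rewrite mul0r addr0 expr0.
rewrite exprS -natr1.
have h : 0 <= n%:R * x * x by rewrite mulr_ge0 // mulr_ge0.
have := ler_wpM2l (addr_ge0 ler01 x0) IH; nra.
Qed.

Lemma small_le0 (R : realType) (x K : R) :
  (forall n : nat, x * (1 + n%:R / 3) <= K) -> x <= 0.
Proof.
move=> H; rewrite leNgt; apply/negP => x0.
have [m hm] : exists m : nat, 3 * K / x < m%:R.
  by exists (Num.Def.trunc (3 * K / x)).+1; exact: truncnS_gt.
have := H m.
have : 3 * K < m%:R * x by rewrite -ltr_pdivrMr.
nra.
Qed.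

Lemma Lip_zero (R : realType) (x c : R) : 0 < c ->
  (forall e, 0 < e -> `|x| <= c * e) -> x = 0.
Proof.
move=> c0 H; apply/normr0_eq0/eqP; rewrite eq_le normr_ge0 andbT.
rewrite leNgt; apply/negP => x0.
have := H (`|x| / (2 * c)); rewrite divr_gt0 ?mulr_gt0 // => /(_ isT).
have -> : c * (`|x| / (2 * c)) = `|x| / 2.
  by field; rewrite gt_eqF.
lra.
Qed.
Definition Dpt (R : realType) (N : R * R -> R) (mu : probability R R) (t : R) :=
  0 < t /\ derivable (fun x => N (x, 1)) t 1 /\
  derive1 (fun x => N (x, 1)) t = Defs.cdf mu t.

Definition hh (R : realType) (N : R * R -> R) (mu : probability R R) (t : R) :=
  N (t, 1) - GG mu t.

Lemma hh_step (R : realType) (N : R * R -> R) (hN : is_norm2 N) (mu : probability R R)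
  (HI : mu.-integrable setT (fun y : R => y%:E)) a b :
  Dpt N mu a -> Dpt N mu b -> a < b ->
  `|hh N mu b - hh N mu a| <= (b - a) * (Defs.cdf mu b - Defs.cdf mu a).
Proof.
move=> [_ [da ea]] [_ [db eb]] ab.
have s1 := slope_s hN ab da; rewrite ea in s1.
have s2 := slope_t hN ab db; rewrite eb in s2.
have /andP[g1 g2] := GG_incr HI (ltW ab).
rewrite /hh ler_norml; apply/andP; split; lra.
Qed.

Lemma hh_iter (R : realType) (N : R * R -> R) (hN : is_norm2 N) (mu : probability R R)
  (HI : mu.-integrable setT (fun y : R => y%:E))
  (dense : forall u v, 0 <= u -> u < v -> exists t, u < t < v /\ Dpt N mu t) n :
  forall a b, Dpt N mu a -> Dpt N mu b -> a < b ->
  `|hh N mu b - hh N mu a| * (1 + 3^-1) ^+ n <=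
     (b - a) * (Defs.cdf mu b - Defs.cdf mu a).
Proof.
elim: n => [|n IH] a b Da Db ab.
  by rewrite expr0 mulr1; exact: hh_step.
have a0 : 0 <= a + (b - a) / 4 by case: Da => a0 _; lra.
have [m [/andP[am mb] Dm]] := dense (a + (b - a) / 4) (b - (b - a) / 4) a0 ltac:(lra).
have e1 := IH a m Da Dm ltac:(lra).
have e2 := IH m b Dm Db ltac:(lra).
set P := (1 + 3^-1) ^+ n in e1 e2 *.
have P0 : 0 <= P by rewrite exprn_ge0 //; lra.
have tri : `|hh N mu b - hh N mu a| <=
    `|hh N mu m - hh N mu a| + `|hh N mu b - hh N mu m|.
  have -> : hh N mu b - hh N mu a = (hh N mu m - hh N mu a) + (hh N mu b - hh N mu m)
    by ring.
  exact: ler_normD.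
have tP := ler_wpM2r P0 tri.
have Fma : 0 <= Defs.cdf mu m - Defs.cdf mu a by rewrite subr_ge0; apply: cdf_mono; lra.
have Fbm : 0 <= Defs.cdf mu b - Defs.cdf mu m by rewrite subr_ge0; apply: cdf_mono; lra.
have k1 : (m - a) * (Defs.cdf mu m - Defs.cdf mu a) <=
    (b - a) * (3 / 4) * (Defs.cdf mu m - Defs.cdf mu a) by apply: ler_wpM2r => //; lra.
have k2 : (b - m) * (Defs.cdf mu b - Defs.cdf mu m) <=
    (b - a) * (3 / 4) * (Defs.cdf mu b - Defs.cdf mu m) by apply: ler_wpM2r => //; lra.
rewrite exprS -/P.
have d0 : 0 <= `|hh N mu b - hh N mu a| * P by rewrite mulr_ge0.
have -> : `|hh N mu b - hh N mu a| * ((1 + 3^-1) * P) =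
          (1 + 3^-1) * (`|hh N mu b - hh N mu a| * P) by ring.
have -> : (b - a) * (Defs.cdf mu b - Defs.cdf mu a) =
   (1 + 3^-1) * ((b - a) * (3 / 4) * (Defs.cdf mu m - Defs.cdf mu a) +
      (b - a) * (3 / 4) * (Defs.cdf mu b - Defs.cdf mu m)) by field.
rewrite ler_pM2l; last by lra.
rewrite mulrDl in tP.
lra.
Qed.

Lemma hh_const (R : realType) (N : R * R -> R) (hN : is_norm2 N) (mu : probability R R)
  (HI : mu.-integrable setT (fun y : R => y%:E))
  (dense : forall u v, 0 <= u -> u < v -> exists t, u < t < v /\ Dpt N mu t) a b :
  Dpt N mu a -> Dpt N mu b -> a < b -> hh N mu b = hh N mu a.
Proof.
move=> Da Db ab; apply/eqP; rewrite -subr_eq0 -normr_le0.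
apply: (small_le0 (K := (b - a) * (Defs.cdf mu b - Defs.cdf mu a))) => n.
apply: le_trans (hh_iter hN HI dense n Da Db ab).
apply: ler_wpM2l => //.
by apply: (@bern R 3^-1 n); lra.
Qed.
Lemma hh_Lip (R : realType) (N : R * R -> R) (hN : is_norm2 N) (mu : probability R R)
  (HI : mu.-integrable setT (fun y : R => y%:E)) x y :
  `|hh N mu x - hh N mu y| <= (N (1, 0) + 1) * `|x - y|.
Proof.
have h1 := NLip hN x y; have h2 := GG_Lip HI y x.
have -> : hh N mu x - hh N mu y = (N (x, 1) - N (y, 1)) - (GG mu x - GG mu y).
  by rewrite /hh; ring.
apply: le_trans (ler_normB _ _) _.
by rewrite mulrDl mul1r mulrC; apply: lerD.
Qed.

Lemma hh_zero_all (R : realType) (N : R * R -> R) (hN : is_norm2 N) (mu : probability R R)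
  (HI : mu.-integrable setT (fun y : R => y%:E))
  (dense : forall u v, 0 <= u -> u < v -> exists t, u < t < v /\ Dpt N mu t)
  (h0 : hh N mu 0 = 0) t : 0 <= t -> hh N mu t = 0.
Proof.
move=> t0.
have L0 : 0 < N (1, 0) + 1 by have := Nge0 hN 1 0; lra.
apply: (@Lip_zero _ _ (2 * (N (1, 0) + 1))); first by lra.
move=> e e0.
have [d1 [/andP[td1 d1te] D1]] := dense t (t + e) t0 ltac:(lra).
have d1p : 0 < d1 by case: D1.
have md : 0 < Num.min e d1 by rewrite lt_min e0 d1p.
have [d0 [/andP[d00 d0m] D0]] := dense 0 (Num.min e d1) (lexx _) md.
move: d0m; rewrite lt_min => /andP[d0e d0d1].
have hc := hh_const hN HI dense D0 D1 d0d1.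
have l1 := hh_Lip hN HI t d1.
have l2 := hh_Lip hN HI d0 0.
have e1 : `|t - d1| = d1 - t by rewrite distrC ger0_norm // subr_ge0 ltW.
have e2 : `|d0 - 0| = d0 by rewrite subr0 ger0_norm // ltW.
rewrite e1 in l1; rewrite e2 in l2.
have l1' : (N (1, 0) + 1) * (d1 - t) <= (N (1, 0) + 1) * e.
  by apply: ler_wpM2l; lra.
have l2' : (N (1, 0) + 1) * d0 <= (N (1, 0) + 1) * e.
  by apply: ler_wpM2l; lra.
have -> : hh N mu t = (hh N mu t - hh N mu d1) + (hh N mu d0 - hh N mu 0).
  by rewrite hc h0; ring.
apply: le_trans (ler_normD _ _) _.
lra.
Qed.

Lemma GG0 (R : realType) (N : R * R -> R) (mu : probability R R)
  (H0 : mu [set` `]-oo, 0[] = 0%E)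
  (Hint : (\int[mu]_y y%:E = (N (0, 1))%:E)%E) : GG mu 0 = N (0, 1).
Proof. by rewrite /GG /Rintegral int_max0 // Hint. Qed.

Lemma N10 (R : realType) (N : R * R -> R) (hN : is_norm2 N) (mu : probability R R)
  (HI : mu.-integrable setT (fun y : R => y%:E))
  (G0 : GG mu 0 = N (0, 1))
  (fG : forall t, 0 <= t -> N (t, 1) = GG mu t) : N (1, 0) = 1.
Proof.
have key : forall t, 0 <= t -> `|t * (N (1, 0) - 1)| <= 2 * N (0, 1).
  move=> t t0.
  have g1 := GG_ge HI t.
  have /andP[_ g2] := GG_incr HI t0.
  have /andP[_ c1] := cdf_01 mu t.
  have g3 : (t - 0) * Defs.cdf mu t <= t by rewrite subr0; rewrite ler_piMr.
  have n2 := N2Lip hN t.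
  have e : N (t, 0) = t * N (1, 0).
    by have := Nhom hN t 1 0; rewrite mulr1 mulr0 ger0_norm.
  rewrite e fG // in n2.
  have n0 := Nge0 hN 0 1.
  rewrite mulrBr mulr1.
  move: n2; rewrite !ler_norml => /andP[n2 n3]; apply/andP; split; lra.
apply/eqP; rewrite -subr_eq0; apply/eqP.
apply: (@Lip_zero _ _ (2 * N (0, 1) + 1)); first by have := Nge0 hN 0 1; lra.
move=> e e0.
have ei : 0 <= e^-1 by rewrite invr_ge0 ltW.
have := key _ ei.
rewrite normrM gtr0_norm ?invr_gt0 // => h.
have := ler_wpM2l (ltW e0) h.
rewrite mulrA mulfV ?gt_eqF // mul1r.
have := Nge0 hN 0 1; nra.
Qed.
Lemma fnorm_final (R : realType) (N : R * R -> R) (hN : is_norm2 N) (mu : probability R R)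
  (HI : mu.-integrable setT (fun y : R => y%:E))
  (rad : radially_symmetric N)
  (fG : forall t, 0 <= t -> N (t, 1) = GG mu t) (n10 : N (1, 0) = 1) :
  Fnorm_eq N mu.
Proof.
move=> x0 x1; have [->|x1n0] := eqVneq x1 0.
  have -> : N (x0, 0) = `|x0|.
    by have := Nhom hN x0 1 0; rewrite mulr1 mulr0 n10 mulr1.
  rewrite (eq_integral (fun _ => `|x0|%:E)); last first.
    by move=> y _; rewrite normr0 mul0r max_l.
  rewrite integral_cst //.
  rewrite [X in _ = (_ * X)%E](_ : _ = 1%E); last exact: (probability_setT mu).
  by rewrite mule1.
have ax1 : 0 < `|x1| by rewrite normr_gt0.
have e1 : N (x0, x1) = `|x1| * GG mu (`|x0| / `|x1|).
  rewrite rad -fG ?divr_ge0 //.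
  have := Nhom hN `|x1| (`|x0| / `|x1|) 1.
  by rewrite normr_id mulr1 mulrCA mulfV ?gt_eqF // mulr1.
rewrite e1 /GG -RintegralZl //; last exact: int_max1.
rewrite (@eq_Rintegral _ _ _ mu setT (fun y => Num.max `|x0| (`|x1| * y))); last first.
  by move=> y _; rewrite maxr_pMr ?ltW // mulrCA mulfV ?gt_eqF // mulr1.
rewrite /Rintegral fineK //.
exact: (integrable_fin_num measurableT (int_max HI `|x0| `|x1|)).
Qed.

Lemma dir2 (R : realType) (N : R * R -> R) (hN : is_norm2 N) (mu : probability R R)
  (rad : radially_symmetric N) (HC : cond_ii N mu) : Fnorm_eq N mu.
Proof.
case: HC => H0 HI Hint Hae.
have dense : forall u v, 0 <= u -> u < v -> exists t, u < t < v /\ Dpt N mu t.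
  move=> u v u0 uv; have [t [/andP[ut tv] Pt]] := ae_dense Hae uv.
  have t0 : 0 < t by apply: le_lt_trans ut.
  exists t; split; first by rewrite ut tv.
  split => //; apply: Pt; rewrite in_itv /= andbT ltW //.
have G0 := GG0 H0 Hint.
have h0 : hh N mu 0 = 0 by rewrite /hh G0 subrr.
have fG : forall t, 0 <= t -> N (t, 1) = GG mu t.
  move=> t t0; apply/eqP; rewrite -subr_eq0; apply/eqP.
  exact: (hh_zero_all hN HI dense h0 t0).
exact: (fnorm_final hN HI rad fG (N10 hN HI G0 fG)).
Qed.
Lemma cdf_right_cvg (R : realType) (mu : probability R R) t :
  cvg (Defs.cdf mu x @[x --> t^'+]).
Proof.
apply: nondecreasing_at_right_is_cvgr.
- by near=> x => a b _ _; exact: cdf_mono.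
- near=> x; exists 0 => _ [y _ <-]; by have /andP[] := cdf_01 mu y.
Unshelve. all: by end_near.
Qed.

Lemma cdf_left_cvg (R : realType) (mu : probability R R) t :
  cvg (Defs.cdf mu x @[x --> t^'-]).
Proof.
apply: nondecreasing_at_left_is_cvgr.
- by near=> x => a b _ _; exact: cdf_mono.
- near=> x; exists 1 => _ [y _ <-]; by have /andP[] := cdf_01 mu y.
Unshelve. all: by end_near.
Qed.
Lemma deriv_at (R : realType) (N : R * R -> R) (mu : probability R R)
  (HI : mu.-integrable setT (fun y : R => y%:E))
  (fG : forall t, 0 <= t -> N (t, 1) = GG mu t) t :
  0 < t -> ~ discontinuity (Defs.cdf mu) t ->
  derivable (fun x => N (x, 1)) t 1 /\
  derive1 (fun x => N (x, 1)) t = Defs.cdf mu t.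
Proof.
move=> t0 nd; set F := Defs.cdf mu.
have cr := @cdf_right_cvg R mu t; have cl := @cdf_left_cvg R mu t.
set Fr := lim (F x @[x --> t^'+]) in cr.
set Fl := lim (F x @[x --> t^'-]) in cl.
have eFlr : Fl = Fr.
  apply/eqP; apply: contrapT => hne; apply: nd; split => //.
  by apply/negP.
have Ftr : F t <= Fr.
  apply: limr_ge => //; near=> x; apply: cdf_mono; apply: ltW.
  by near: x; exact: nbhs_right_gt.
have Flt : Fl <= F t.
  apply: limr_le => //; near=> x; apply: cdf_mono; apply: ltW.
  by near: x; exact: nbhs_left_lt.
have eF : F t = Fr by apply/eqP; rewrite eq_le Ftr -eFlr Flt.
apply: cvg_derive; apply/cvgrPdist_le => e e0.
have [d1 d10 H1] := near_right_ex ((proj1 (cvgrPdist_le _ _)) cr e e0).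
have [d2 d20 H2] := near_left_ex ((proj1 (cvgrPdist_le _ _)) cl e e0).
have md : 0 < Num.min d1 (Num.min d2 t) by rewrite !lt_min d10 d20 t0.
apply: (near_dnbhs0 md) => h hne0; rewrite !lt_min => /and3P[hd1 hd2 ht].
have hta : - t < h < t by rewrite -ltr_norml.
have /andP[hd1a hd1b] : - d1 < h < d1 by rewrite -ltr_norml.
have /andP[hd2a hd2b] : - d2 < h < d2 by rewrite -ltr_norml.
rewrite (fG (h + t)); last by lra.
rewrite (fG t); last by lra.
set X := GG mu (h + t) - GG mu t.
rewrite ler_distlC; apply/andP; split.
- apply: divge => // [hp|hn].
  + have /andP[g1 _] := GG_incr HI (s := t) (t := h + t) ltac:(lra).
    have : (h + t - t) = h by ring.
    move=> eh; rewrite eh -/F in g1.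
    have : (F t - e) * h <= F t * h by rewrite ler_pM2r //; lra.
    rewrite /X; lra.
  + have /andP[g1 _] := GG_incr HI (s := h + t) (t := t) ltac:(lra).
    have : (t - (h + t)) = - h by ring.
    move=> eh; rewrite eh -/F in g1.
    have hF : Fl - e <= F (h + t).
      have := H2 (h + t).
      have -> : t - d2 < h + t < t by apply/andP; split; lra.
      move=> /(_ isT); rewrite ler_distlC -/F => /andP[? ?]; lra.
    have : - h * (F t - e) <= - h * F (h + t).
      by rewrite ler_pM2l; lra.
    rewrite /X; lra.
- apply: divle => // [hp|hn].
  + have /andP[_ g2] := GG_incr HI (s := t) (t := h + t) ltac:(lra).
    have : (h + t - t) = h by ring.
    move=> eh; rewrite eh -/F in g2.
    have hF : F (h + t) <= Fr + e.
      have := H1 (h + t).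
      have -> : t < h + t < t + d1 by apply/andP; split; lra.
      move=> /(_ isT); rewrite ler_distlC -/F => /andP[? ?]; lra.
    have : h * F (h + t) <= h * (F t + e).
      by rewrite ler_pM2l //; lra.
    rewrite /X; lra.
  + have /andP[_ g2] := GG_incr HI (s := h + t) (t := t) ltac:(lra).
    have : (t - (h + t)) = - h by ring.
    move=> eh; rewrite eh -/F in g2.
    have : - h * (F t) <= - h * (F t + e).
      by rewrite ler_pM2l; lra.
    rewrite /X; lra.
Unshelve. all: by end_near.
Qed.
Lemma fG_of_E (R : realType) (N : R * R -> R) (mu : probability R R)
  (HI : mu.-integrable setT (fun y : R => y%:E)) (E : Fnorm_eq N mu) t :
  0 <= t -> N (t, 1) = GG mu t.
Proof.
move=> t0; apply: EFin_inj; rewrite E normr1 ger0_norm //.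
rewrite /GG /Rintegral fineK; last first.
  exact: (integrable_fin_num measurableT (int_max1 HI t)).
by apply: eq_integral => y _; rewrite mul1r.
Qed.

Lemma dir1 (R : realType) (N : R * R -> R) (hN : is_norm2 N) (mu : probability R R)
  (HL : Fnorm_law mu) (E : Fnorm_eq N mu) : radially_symmetric N /\ cond_ii N mu.
Proof.
case: HL => H0 HI Hpos.
split.
  move=> x0 x1; apply: EFin_inj; rewrite !E !normr_id //.
split => //.
  rewrite E normr0 normr1 -int_max0 //.
  by apply: eq_integral => y _; rewrite mul1r.
have fG := fG_of_E HI E.
set F := Defs.cdf mu.
pose S := \bigcup_(n in [set: nat])
  (if n is 0%N then [set (0:R)] else [set x | (x \in `]0, n%:R[) /\ discontinuity F x]).
have cS : countable S.
  apply: bigcup_countable => // -[|n] _; first exact: countable1.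
  apply: discontinuity_countable => a b _ _; exact: cdf_mono.
exists S; split.
- apply: countable_measurable => //; exact: measurable_set1.
- exact: countable_lebesgue_measure0.
- move=> t /= nP; have [t0|tn0] := eqVneq t 0.
    by exists 0%N.
  apply: contrapT => nS; apply: nP => ht.
  have tp : 0 < t by rewrite lt_neqAle eq_sym tn0; move: ht; rewrite in_itv /= andbT.
  apply: (deriv_at HI fG tp) => dis; apply: nS.
  exists (Num.Def.trunc t).+1 => //=; split => //.
  by rewrite in_itv /= tp truncnS_gt.
Qed.
Theorem corollary2p10 (R : realType) (N : R * R -> R) (hN : is_norm2 N) :
  (is_Fnorm N <->
     (radially_symmetric N /\ exists mu : probability R R, cond_ii N mu)) /\
  (forall mu : probability R R,
     radially_symmetric N -> cond_ii N mu -> Fnorm_eq N mu).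
Proof.
split; last by move=> mu rad ci; exact: (@dir2 R N hN mu rad ci).
split.
  move=> [mu [HL E]]; have [rad ci] := dir1 hN HL E; split => //; by exists mu.
move=> [rad [mu ci]]; exists mu; split; last exact: (@dir2 R N hN mu rad ci).
case: ci => H0 HI Hint _; split => //.
rewrite Hint lte_fin lt_neqAle Nge0 // andbT.
apply/eqP => h; move: hN; rewrite /is_norm2 => -[def _ _].
have [_ /eqP] := def 0 1 (esym h); by rewrite oner_eq0.
Qed.
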